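(* Let $x \geq 1$ and $m \geq 2$ be integers. Let $\mathcal{C}_{m,x}$ be the set of binary words of length $m$ containing no pattern from $\mathcal{T}_x = \{0\mathbf{1}^y0,\ 1\mathbf{0}^y1 : 1\le y\le x\}$ as a contiguous substring, listed in increasing lexicographic order, and for $\mathbf{c} = [c_{m-1}\, c_{m-2} \dots c_0] \in \mathcal{C}_{m,x}$ (with $c_{m-1}$ the leftmost bit) let $g(\mathbf{c}) \in \{0,\dots,|\mathcal{C}_{m,x}|-1\}$ be its position in this list. Let $N(k,x) = |\mathcal{C}_{k,x}|$ for $k\ge 1$ and $N(k,x) \triangleq 2$ for all integers $k \le 1$. Then: if $c_{m-1}=0$, $$g(\mathbf{c}) = \frac12 \sum_{\substack{0\le i\le m-2\\ c_i=1}} N(i-x+1,x);$$ if $c_{m-1}=1$, $$g(\mathbf{c}) = \frac12\Big[N(m,x) + \sum_{\substack{0\le i\le m-2\\ c_i=1}} N(i-x+1,x)\Big].$$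
   Context: $\mathbf{0}^r$ (resp. $\mathbf{1}^r$) denotes a run of $r$ consecutive $0$'s (resp. $1$'s). Lexicographic order on binary words of a fixed length is the order as binary numbers with the leftmost bit most significant; positions are counted from $0$. *)

(* Defs.v *)
From mathcomp Require Import all_boot all_order all_algebra.
Set Implicit Arguments. Unset Strict Implicit. Unset Printing Implicit Defensive.
Import Order.TTheory GRing.Theory Num.Theory.

(* Binary words are written left to right as sequences of bools
   (false = 0, true = 1); a word of length m is [c_{m-1} ... c_0]. *)

Definition pat01 (y : nat) : seq bool := false :: rcons (nseq y true) false.
Definition pat10 (y : nat) : seq bool := true :: rcons (nseq y false) true.

Definition avoids (x : nat) (w : seq bool) : bool :=
  [forall y : 'I_x.+1, (0 < y)%N ==>
     ~~ infix (pat01 y) w && ~~ infix (pat10 y) w].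

Definition Cset (m x : nat) : {set m.-tuple bool} :=
  [set t : m.-tuple bool | avoids x t].

Definition bval (w : seq bool) : nat := foldl (fun acc (b : bool) => acc.*2 + b) 0 w.

(* position of c in the lexicographic (= numeric) listing of C_{m,x} *)
Definition gpos (m x : nat) (c : m.-tuple bool) : nat :=
  #|[set t in Cset m x | (bval t < bval c)%N]|.

Definition Ncount (k : int) (x : nat) : nat :=
  if (k <= 1)%R then 2 else #|Cset `|k|%N x|.

Definition bit (m : nat) (c : m.-tuple bool) (i : nat) : bool :=
  nth false c (m.-1 - i).

(* Main.v *)
Require Import Defs.
From mathcomp Require Import all_boot all_order all_algebra.
From mathcomp Require Import zify.
Set Implicit Arguments. Unset Strict Implicit. Unset Printing Implicit Defensive.

Fixpoint allw (n : nat) : seq (seq bool) :=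
  if n is n'.+1 then map (cons false) (allw n') ++ map (cons true) (allw n')
  else [:: [::]].

Lemma count_allwS (P : pred (seq bool)) n :
  count P (allw n.+1) = count (fun u => P (false :: u)) (allw n) + count (fun u => P (true :: u)) (allw n).
Proof. by rewrite /= count_cat !count_map. Qed.

Lemma count_allwSb (P : pred (seq bool)) n b :
  count P (allw n.+1) = count (fun u => P (b :: u)) (allw n) + count (fun u => P (~~ b :: u)) (allw n).
Proof. by rewrite count_allwS; case: b => //=; rewrite addnC. Qed.

Lemma mem_map_cons (b h : bool) s (A : seq (seq bool)) :
  (h :: s \in map (cons b) A) = (h == b) && (s \in A).
Proof.
apply/mapP/andP => [[u Hu [-> ->]] | [/eqP -> Hs]]; first by [].
by exists s.
Qed.

Lemma nil_map_cons (b : bool) (A : seq (seq bool)) : ([::] \in map (cons b) A) = false.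
Proof. by apply/mapP => [[u _]]. Qed.

Lemma mem_allw n s : (s \in allw n) = (size s == n).
Proof.
elim: n s => [|n IH] [|h s]; rewrite ?inE //=.
- by rewrite mem_cat !nil_map_cons.
- rewrite mem_cat !mem_map_cons IH eqSS; case: h => //=; by rewrite orbF.
Qed.

Lemma uniq_allw n : uniq (allw n).
Proof.
elim: n => //= n IH; rewrite cat_uniq !map_inj_uniq //; last first.
  by move=> u v [].
  by move=> u v [].
rewrite IH /= andbT; apply/hasPn => t /mapP [u _ ->].
by rewrite mem_map_cons.
Qed.

Lemma card_allw n (A : {set n.-tuple bool}) (P : pred (seq bool)) :
  (forall t, (t \in A) = P (val t)) -> #|A| = count P (allw n).
Proof.
move=> HA.
rewrite cardE /enum_mem size_filter -enumT.
rewrite (eq_count (a2 := fun t : n.-tuple bool => P (val t))); last by move=> t; rewrite /= HA.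
rewrite -(count_map val P).
apply/(permP _ _).
apply: uniq_perm.
- rewrite map_inj_uniq ?enum_uniq //; exact: val_inj.
- exact: uniq_allw.
move=> s; rewrite mem_allw; apply/mapP/eqP => [[t _ ->] | Hs]; first by rewrite size_tuple.
by exists (Tuple (introT eqP Hs)); rewrite ?mem_enum ?inE.
Qed.

Lemma bval_acc acc s : foldl (fun acc (b : bool) => acc.*2 + b) acc s = acc * 2 ^ size s + bval s.
Proof.
rewrite /bval; elim: s acc => [|h s IH] acc /=; first by rewrite muln1 addn0.
rewrite IH [in RHS]IH expnS -!muln2; case: h => /=; nia.
Qed.

Lemma bval_cons (h : bool) s : bval (h :: s) = h * 2 ^ size s + bval s.
Proof. by rewrite {1}/bval /= bval_acc. Qed.

Lemma bval_lt s : bval s < 2 ^ size s.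
Proof.
elim: s => [|h s IH] //=; rewrite bval_cons expnS; case: h => /=; lia.
Qed.

Lemma bval_cmp (h h' : bool) s s' : size s = size s' ->
  (bval (h :: s) < bval (h' :: s')) = (h < h') || ((h == h') && (bval s < bval s')).
Proof.
move=> Hs; rewrite !bval_cons Hs.
have := bval_lt s; have := bval_lt s'; rewrite Hs.
case: h; case: h' => /=; lia.
Qed.

Definition badk (b : bool) k (u : seq bool) :=
  has (fun y => prefix (rcons (nseq y (~~ b)) b) u) (iota 0 k).
Definition bad x (b : bool) (w : seq bool) :=
  has (fun y => prefix (rcons (nseq y.+1 (~~ b)) b) w) (iota 0 x).

Lemma avoids_nil x : avoids x [::].
Proof. by apply/forallP => y; apply/implyP => _. Qed.

Lemma avoids_cons x b w : avoids x (b :: w) = avoids x w && ~~ bad x b w.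
Proof.
rewrite /avoids.
transitivity ([forall y : 'I_x.+1, (0 < y) ==> ~~ infix (pat01 y) w && ~~ infix (pat10 y) w] &&
  [forall y : 'I_x.+1, (0 < y) ==> ~~ prefix (pat01 y) (b :: w) && ~~ prefix (pat10 y) (b :: w)]).
  apply/forallP/andP => [H | [/forallP H1 /forallP H2] y].
    split; apply/forallP => y; have := H y; rewrite !infix_consl;
    by case: (0 < y); case: (prefix (pat01 y) (b :: w)); case: (prefix (pat10 y) (b :: w)); case: (infix (pat01 y) w); case: (infix (pat10 y) w).
  have := H1 y; have := H2 y; rewrite !infix_consl;
  by case: (0 < y); case: (prefix (pat01 y) (b :: w)); case: (prefix (pat10 y) (b :: w)); case: (infix (pat01 y) w); case: (infix (pat10 y) w).
congr andb.
transitivity [forall y : 'I_x.+1, (0 < y) ==> ~~ prefix (rcons (nseq y (~~ b)) b) w].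
  apply eq_forallb => y; rewrite /pat01 /pat10; case: b => /=; by rewrite ?andbT.
apply/forallP/hasPn => [H y | H y].
  rewrite mem_iota => /andP [_ hy].
  have hy' : y.+1 < x.+1 by [].
  by have := H (Ordinal hy').
apply/implyP => hy0.
have hy : (y.-1 < x) by have := ltn_ord y; lia.
have := H y.-1; rewrite mem_iota add0n leq0n hy prednK //; by apply.
Qed.

Lemma bad_nil x b : bad x b [::] = false.
Proof. by apply/hasPn => y _. Qed.

Lemma avoids_single x b : avoids x [:: b].
Proof. by rewrite avoids_cons avoids_nil bad_nil. Qed.

Lemma bad_cons x b h u : bad x b (h :: u) = (h == ~~ b) && badk b x u.
Proof.
rewrite /bad /badk; case: eqP => [->|/eqP hn] /=.
  by apply eq_has => y /=; rewrite eqxx.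
apply/hasPn => y _ /=; rewrite eq_sym; by rewrite (negbTE hn).
Qed.

Lemma badk_nil b k : badk b k [::] = false.
Proof.
apply/hasPn => y _; rewrite prefixs0; apply/eqP => /(congr1 size); by rewrite size_rcons.
Qed.

Lemma badk0 b u : badk b 0 u = false.
Proof. by []. Qed.

Lemma badk_same b k u : badk b k.+1 (b :: u) = true.
Proof. by rewrite /badk /= eqxx prefix0s. Qed.

Lemma badk_diff b k u : badk b k.+1 (~~ b :: u) = badk b k u.
Proof.
rewrite /badk /=.
have -> : (b == ~~ b) = false by case: b.
have -> : iota 1 k = map (addn 1) (iota 0 k) by rewrite -iotaDl.
rewrite /= has_map; apply eq_has => y /=.
by rewrite /= eqxx.
Qed.

Lemma prefix_negb (s1 s2 : seq bool) : prefix (map negb s1) (map negb s2) = prefix s1 s2.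
Proof.
elim: s2 s1 => [|h s IH] [|h1 s1] //=; rewrite IH; by case: h; case: h1.
Qed.

Lemma infix_negb (s1 s2 : seq bool) : infix (map negb s1) (map negb s2) = infix s1 s2.
Proof.
elim: s2 => [|h s IH]; first by case: s1.
have -> : map negb (h :: s) = ~~ h :: map negb s by [].
by rewrite !infix_consl IH -(prefix_negb s1 (h :: s)).
Qed.

Lemma avoids_neg x w : avoids x (map negb w) = avoids x w.
Proof.
rewrite /avoids; apply eq_forallb => y.
have E1 : pat01 y = map negb (pat10 y) by rewrite /pat01 /pat10 /= map_rcons map_nseq.
have E2 : pat10 y = map negb (pat01 y) by rewrite /pat01 /pat10 /= map_rcons map_nseq.
rewrite [in infix (pat01 y) (map negb w)]E1 [in infix (pat10 y) (map negb w)]E2 !infix_negb.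
by case: (0 < y) => //=; rewrite andbC.
Qed.

Lemma count_neg n (P : pred (seq bool)) :
  count (fun u => P (map negb u)) (allw n) = count P (allw n).
Proof.
elim: n P => [|n IH] P //.
rewrite !count_allwS /=.
rewrite (IH (fun u => P (true :: u))) (IH (fun u => P (false :: u))).
by rewrite addnC.
Qed.

Definition a x k := count (fun u => avoids x (false :: u)) (allw k.-1).

Lemma count_cons_b x b n : count (fun u => avoids x (b :: u)) (allw n) = a x n.+1.
Proof.
case: b; last by [].
rewrite /a /= -(count_neg n (fun u => avoids x (false :: u))).
apply eq_count => u /=.
by rewrite -[false :: map negb u]/(map negb (true :: u)) avoids_neg.
Qed.

Lemma a_small x k : k <= 1 -> a x k = 1.
Proof. by case: k => [|[|k]] // _; rewrite /a /= avoids_single. Qed.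

Lemma count_false T (s : seq T) : count (fun _ => false) s = 0.
Proof. by elim: s. Qed.

Lemma count_split T (s : seq T) (P Q : pred T) :
  count (fun t => P t && Q t) s + count (fun t => P t && ~~ Q t) s = count P s.
Proof. elim: s => //= h s IH; rewrite -IH; case: (P h); case: (Q h) => /=; lia. Qed.

Lemma count_andc T (s : seq T) (P : pred T) (c : bool) :
  count (fun t => P t && c) s = c * count P s.
Proof. case: c => /=; rewrite ?mul1n ?mul0n; last by elim: s => //= h s ->; rewrite andbF.
by apply eq_count => t; rewrite andbT. Qed.

Lemma neqb (b : bool) : (b == ~~ b) = false. Proof. by case: b. Qed.

Lemma R_eq x b k n :
  count (fun u => avoids x (~~ b :: u) && ~~ badk b k u) (allw n) = a x (n.+1 - k).
Proof.
elim: k n => [|k IH] n.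
  rewrite subn0 -(count_cons_b x (~~ b)); apply eq_count => u; by rewrite badk0 andbT.
case: n => [|n].
  rewrite /= badk_nil avoids_single a_small //; lia.
rewrite (count_allwSb _ n b).
rewrite (eq_count (a2 := fun _ => false)); last by move=> u; rewrite badk_same andbF.
rewrite count_false add0n.
rewrite (eq_count (a2 := fun u => avoids x (~~ b :: u) && ~~ badk b k u)).
  by rewrite IH subSS.
move=> u /=; rewrite badk_diff avoids_cons bad_cons negbK eq_sym neqb /=.
by rewrite andbT.
Qed.

Lemma B1 x b n :
  count (fun t => avoids x t && bad x b t) (allw n.+1) + a x (n.+1 - x) = a x n.+1.
Proof.
rewrite (count_allwSb _ n b).
rewrite (eq_count (a2 := fun _ => false)); last by move=> u; rewrite bad_cons neqb andbF.
rewrite count_false add0n -(R_eq x b x n).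
rewrite (eq_count (a2 := fun u => avoids x (~~ b :: u) && badk b x u)); last first.
  by move=> u /=; rewrite bad_cons eqxx.
by rewrite count_split count_cons_b.
Qed.

Lemma badk_diff' b h k u : h != b -> badk b k.+1 (h :: u) = badk b k u.
Proof.
move=> hb; have -> : h = ~~ b by case: b h hb => [] [].
by rewrite badk_diff.
Qed.

Lemma badk_cmp b k t c : size t = size c -> badk b k t -> ~~ badk b k c ->
  (bval t < bval c) = ~~ b.
Proof.
elim: k t c => [|k IH] t c; first by rewrite badk0.
case: t => [|h t]; first by rewrite badk_nil.
case: c => [|h' c] //= [Hs] Ht Hc.
case: (eqVneq h' b) => [Eh'|Nh']; first by rewrite Eh' badk_same in Hc.
rewrite badk_diff' // in Hc.
rewrite bval_cmp //.
case: (eqVneq h b) => [Eh|Nh].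
  by rewrite Eh; move: Nh'; clear; case: b; case: h'.
have Ehh : h = h' by move: Nh Nh'; clear; case: b; case: h; case: h'.
rewrite badk_diff' // in Ht.
by rewrite Ehh ltnn eqxx /= IH.
Qed.

Lemma bad_cmp x b t h' c : size t = (size c).+1 -> bad x b t -> ~~ bad x b (h' :: c) ->
  (bval t < bval (h' :: c)) = h'.
Proof.
case: t => [|h t]; first by rewrite bad_nil.
move=> [Hs]; rewrite !bad_cons => /andP [/eqP -> Ht] Hc.
rewrite bval_cmp //.
case: (eqVneq h' b) => [->|Nh']; first by clear; case: b.
have Eh' : h' = ~~ b by move: Nh'; clear; case: b; case: h'.
rewrite Eh' eqxx /= in Hc; rewrite Eh' ltnn eqxx /=.
exact: (badk_cmp Hs Ht Hc).
Qed.

Fixpoint F x (s : seq bool) : nat :=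
  if s is b :: w then F x w + (if w is h :: _ then h * a x (size w - x) else 0) else 0.

Lemma split_main x b c :
  count (fun t => avoids x t && (bval t < bval (b :: c))) (allw (size c).+1) =
  b * a x (size c).+1 + count (fun u => avoids x (b :: u) && (bval u < bval c)) (allw (size c)).
Proof.
rewrite count_allwS.
have E : forall h, {in allw (size c), (fun u => avoids x (h :: u) && (bval (h :: u) < bval (b :: c)))
   =1 (fun u => avoids x (h :: u) && ((h < b) || (h == b) && (bval u < bval c)))}.
  by move=> h u; rewrite mem_allw => /eqP Hu /=; rewrite bval_cmp.
rewrite (eq_in_count (E false)) (eq_in_count (E true)).
clear E; case: b => /=.
  rewrite (eq_count (a2 := fun u => avoids x (false :: u))); last by move=> u; rewrite andbT.
  by rewrite count_cons_b mul1n.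
rewrite [X in _ + X = _](eq_count (a2 := fun _ => false)); last by move=> u; rewrite andbF.
by rewrite count_false addn0 mul0n add0n.
Qed.

Lemma main x c : 0 < size c -> avoids x c ->
  count (fun t => avoids x t && (bval t < bval c)) (allw (size c)) =
  head false c * a x (size c) + F x c.
Proof.
elim: c => [|b c IH] // _ Hc.
case: c IH Hc => [|h' c''] IH Hc.
  by clear Hc IH; case: b; rewrite /= !avoids_single a_small.
move: Hc; rewrite avoids_cons => /andP [Hc Hnb].
have {}IH := IH isT Hc.
have HB := B1 x b (size c'').
rewrite (split_main x b (h' :: c'')).
have Fe : F x (b :: h' :: c'') = F x (h' :: c'') + h' * a x ((size c'').+1 - x) by [].
rewrite Fe.
change (head false (b :: h' :: c'')) with b.
change (size (b :: h' :: c'')) with (size (h' :: c'')).+1.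
change (size (h' :: c'')) with (size c'').+1 in IH |- *.
change (head false (h' :: c'')) with h' in IH.
rewrite (eq_count (a2 := fun u => (avoids x u && (bval u < bval (h' :: c''))) && ~~ bad x b u)); last first.
  by move=> u; rewrite avoids_cons; case: (avoids x u); case: (bad x b u); case: (bval u < bval (h' :: c'')).
rewrite -(count_split _ _ (bad x b)) in IH.
rewrite (eq_in_count (a1 := fun u => (avoids x u && (bval u < bval (h' :: c''))) && bad x b u)
   (a2 := fun u => (avoids x u && bad x b u) && h')) in IH; last first.
  move=> u; rewrite mem_allw => /eqP Hu /=.
  case Hb: (bad x b u); rewrite ?andbF ?andbT //.
  by rewrite (bad_cmp (x := x) (b := b) (h' := h') (c := c'')) // Hu.
rewrite count_andc in IH.
set K := count (fun t : seq bool => avoids x t && bad x b t) (allw (size c'').+1) in IH HB.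
clear Fe; case: h' IH HB Hnb Hc => IH HB Hnb Hc; lia.
Qed.

Lemma card_C x k : #|Cset k.+1 x| = 2 * a x k.+1.
Proof.
rewrite (card_allw (P := avoids x)); last by move=> t; rewrite inE.
rewrite count_allwS (count_cons_b x false) (count_cons_b x true); lia.
Qed.

Lemma Ncount_i x i : Ncount (Posz i - Posz x + 1)%R x = 2 * a x (i.+1 - x).
Proof.
rewrite /Ncount; case: ifP => H.
  rewrite a_small //; lia.
have E : (Posz i - Posz x + 1 = Posz (i.+1 - x))%R by lia.
rewrite E /=.
have : 1 < i.+1 - x by lia.
case: (i.+1 - x) => [|[|k]] // _.
by rewrite card_C.
Qed.

Lemma Ncount_m x m : 1 < m -> Ncount (Posz m) x = 2 * a x m.
Proof.
move=> hm; rewrite /Ncount; case: ifP => H; first by lia.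
case: m hm {H} => [|m] // _; by rewrite card_C.
Qed.

Lemma sum_F x s :
  (\sum_(0 <= i < (size s).-1 | nth false s ((size s).-1 - i)) Ncount (Posz i - Posz x + 1)%R x)%N
  = 2 * F x s.
Proof.
elim: s => [|b w IH]; first by rewrite big_geq.
rewrite [size (b :: w)]/= -[(size w).+1.-1]/(size w).
rewrite (@congr_big_nat _ _ _ 0 (size w) 0 (size w) _ (fun i => nth false w ((size w).-1 - i))
   _ (fun i => 2 * a x (i.+1 - x)) erefl erefl); last first.
  by move=> i _; rewrite Ncount_i.
  move=> i /andP [_ hi]; have -> : size w - i = ((size w).-1 - i).+1 by lia.
  by [].
case: w IH => [|h w] IH; first by rewrite big_geq.
rewrite big_mkcond big_nat_recr //= -big_mkcond /=.
rewrite -(@congr_big_nat _ _ _ 0 (size w) 0 (size w) (fun i => nth false (h :: w) ((size (h :: w)).-1 - i)) _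
   (fun i => Ncount (Posz i - Posz x + 1)%R x) _ erefl erefl); last first.
  by move=> i _; rewrite Ncount_i.
  by [].
rewrite -/(size w).
change ((size (h :: w)).-1) with (size w) in IH.
rewrite IH subnn.
change (F x w + (if w is h0 :: _ then h0 * a x (size w - x) else 0)) with (F x (h :: w)).
by clear IH; case: h => /=; lia.
Qed.

Theorem theorem2 (x m : nat) (hx : (1 <= x)%N) (hm : (2 <= m)%N)
  (c : m.-tuple bool) (hc : c \in Cset m x) :
  let S := (\sum_(0 <= i < m.-1 | bit c i) Ncount (Posz i - Posz x + 1)%R x)%N in
  (bit c m.-1 = false -> (2 * gpos x c = S)%N) /\
  (bit c m.-1 = true -> (2 * gpos x c = Ncount (Posz m) x + S)%N).
Proof.
move=> S.
have hc' : avoids x c by rewrite inE in hc.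
have Hg : gpos x c = count (fun t => avoids x t && (bval t < bval c)) (allw m).
  rewrite /gpos (card_allw (P := fun t => avoids x t && (bval t < bval c))) //.
  by move=> t; rewrite !inE.
have Hm : size c = m := size_tuple c.
have Hmain := main (c := c).
rewrite Hm in Hmain.
have {}Hmain := Hmain x (ltnW hm) hc'.
have HS : S = 2 * F x c.
  rewrite /S -(sum_F x c) Hm; by [].
have Hb : bit c m.-1 = head false c.
  by rewrite /bit subnn; case: (tval c).
rewrite Hb Hg Hmain HS Ncount_m //.
by split => Hh; rewrite Hh; lia.
Qed.
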